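(* Let $W\in\mathbb C^{N\times N}$ be Hermitian positive definite, $\vec b\in\mathbb C^N$ with $\|\vec b\|_2=1$, and let $\vec x_k$ be the $k$-th iterate of the MINRES algorithm applied to $W\vec x=\vec b$. Let $\mu_T$ be the spectral measure of $(W,\vec b)$. Then for every $k\in\mathbb N$ (for which the orthogonal polynomials up to degree $k+1$ are defined), $$\|\vec r_k\|_2^2=\frac{1}{\sum_{j=0}^kp_j(0;\mu_T)^2}=\frac{1}{b_k(\mu_T)\big[p_{k+1}'(0;\mu_T)p_k(0;\mu_T)-p_k'(0;\mu_T)p_{k+1}(0;\mu_T)\big]}=\frac{\prod_{j=0}^{k-1}b_j(\mu_T)^2}{\pi_{k+1}'(0;\mu_T)\pi_k(0;\mu_T)-\pi_k'(0;\mu_T)\pi_{k+1}(0;\mu_T)}.$$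
   Context: Write $W=U\Lambda U^*$ with $U$ unitary and $\Lambda=\mathrm{diag}(\lambda_1,\dots,\lambda_N)$; the spectral measure of $(W,\vec b)$ is $\mu_T=\sum_j\omega_j\delta_{\lambda_j}$, $(\omega_j)=|U^*\vec b|^2$ (entrywise). $p_n(\lambda;\mu)$ are the orthonormal polynomials with positive leading coefficient for $\mu$; they satisfy $\lambda p_n=b_np_{n+1}+a_np_n+b_{n-1}p_{n-1}$ with $b_n=b_n(\mu)>0$, $p_{-1}=0$. $\pi_n(\lambda;\mu)$ is the monic orthogonal polynomial of degree $n$; primes denote derivatives in $\lambda$. MINRES iterate: $\vec x_k=\mathrm{argmin}_{\vec y\in\mathcal K_k}\|\vec b-W\vec y\|_2$ with $\mathcal K_k=\mathrm{span}\{\vec b,W\vec b,\dots,W^{k-1}\vec b\}$; $\vec r_k=\vec b-W\vec x_k$. *)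

(* Defs.v *)
(* Complex scalars: an arbitrary numClosedFieldType C
   (e.g. algC, or complex R for R : rcfType). *)
From HB Require Import structures.
From mathcomp Require Import all_boot all_order all_algebra.
From mathcomp Require Export sesquilinear spectral.
Set Implicit Arguments. Unset Strict Implicit. Unset Printing Implicit Defensive.
Import Order.TTheory GRing.Theory Num.Theory.
Local Open Scope ring_scope.
Local Open Scope sesquilinear_scope.

Definition norm2sq (C : numClosedFieldType) (N : nat) (v : 'cV[C]_N) : C :=
  \sum_(i < N) `|v i 0| ^+ 2.

Definition in_krylov (C : numClosedFieldType) (N : nat) (W : 'M[C]_N)
  (b : 'cV[C]_N) (k : nat) (y : 'cV[C]_N) : Prop :=
  exists c : 'I_k -> C, y = \sum_(i < k) c i *: (W ^+ i *m b).

Definition is_minres_iterate (C : numClosedFieldType) (N : nat) (W : 'M[C]_N)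
  (b : 'cV[C]_N) (k : nat) (x : 'cV[C]_N) : Prop :=
  in_krylov W b k x /\
  forall y, in_krylov W b k y -> norm2sq (b - W *m x) <= norm2sq (b - W *m y).

(* Spectral measure mu_T = sum_j omega_j delta_{lambda_j} of (W,b), where
   W = U Lambda U^*, Lambda = diag_mx Lam:  lambda_j = Lam 0 j,
   (omega_j) = |U^* b|^2 entrywise. *)
Definition spec_nodes (C : numClosedFieldType) (N : nat) (Lam : 'rV[C]_N)
  : 'I_N -> C := fun j => Lam 0 j.
Definition spec_weights (C : numClosedFieldType) (N : nat) (U : 'M[C]_N)
  (b : 'cV[C]_N) : 'I_N -> C := fun j => `|(U ^t* *m b) j 0| ^+ 2.

Definition mu_ip (C : numClosedFieldType) (N : nat) (lam om : 'I_N -> C)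
  (f g : {poly C}) : C :=
  \sum_(j < N) om j * f.[lam j] * (g.[lam j])^*.

Definition is_orthonormal_family (C : numClosedFieldType) (N : nat)
  (lam om : 'I_N -> C) (n : nat) (p : nat -> {poly C}) : Prop :=
  (forall i, (i <= n)%N -> size (p i) = i.+1 /\ 0 < lead_coef (p i)) /\
  (forall i j, (i <= n)%N -> (j <= n)%N -> mu_ip lam om (p i) (p j) = (i == j)%:R).

(* b_n(mu): coefficient of p_{n+1} in the three-term recurrence
   lambda p_n = b_n p_{n+1} + a_n p_n + b_{n-1} p_{n-1},
   i.e. b_n = <lambda p_n, p_{n+1}>_mu. *)
Definition rec_b (C : numClosedFieldType) (N : nat) (lam om : 'I_N -> C)
  (p : nat -> {poly C}) (n : nat) : C :=
  mu_ip lam om ('X * p n) (p n.+1).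

Definition monic_op (C : numClosedFieldType) (p : nat -> {poly C}) (n : nat)
  : {poly C} := (lead_coef (p n))^-1 *: p n.

(* Main.v *)
Require Import Defs.
From HB Require Import structures.
From mathcomp Require Import all_boot all_order all_algebra.
From mathcomp Require Import sesquilinear spectral.
From mathcomp Require Import ring.
Import Order.TTheory GRing.Theory Num.Theory.
Local Open Scope ring_scope.
Local Open Scope sesquilinear_scope.
Set Implicit Arguments. Unset Strict Implicit.


Definition Qpoly (C : numClosedFieldType) k (c : 'I_k -> C) : {poly C} :=
  1 - 'X * \sum_(i < k) c i *: 'X^i.

Lemma Qpoly0 (C : numClosedFieldType) k (c : 'I_k -> C) : (Qpoly c)`_0 = 1.
Proof. by rewrite /Qpoly coefB coef1 coefXM /= subr0. Qed.

Lemma Qpoly_size (C : numClosedFieldType) k (c : 'I_k -> C) :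
  (size (Qpoly c) <= k.+1)%N.
Proof.
apply/leq_sizeP => l Hl; rewrite /Qpoly coefB coef1 coefXM.
case: l Hl => [|m] //= Hm; rewrite sub0r coef_sum big1 ?oppr0 // => i _.
by rewrite coefZ coefXn (gtn_eqF (leq_trans (ltn_ord i) Hm)) mulr0.
Qed.

Lemma Q_repr (C : numClosedFieldType) k (q : {poly C}) :
  (size q <= k.+1)%N -> q`_0 = 1 -> q = Qpoly (fun i : 'I_k => - q`_i.+1).
Proof.
move=> Hq H0; apply/polyP => l; rewrite /Qpoly coefB coef1 coefXM.
case: l => [|m] /=; first by rewrite subr0.
rewrite sub0r coef_sum.
under eq_bigr => i _ do rewrite coefZ coefXn.
case: (ltnP m k) => Hm.
  rewrite (bigD1 (Ordinal Hm)) //= eqxx mulr1 big1 ?addr0 ?opprK // => i Hi.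
  by move: Hi; rewrite -val_eqE /= eq_sym => /negbTE ->; rewrite mulr0.
rewrite big1 ?oppr0; first by apply: (leq_sizeP _ _ Hq).
by move=> i _; rewrite (gtn_eqF (leq_trans (ltn_ord i) Hm)) mulr0.
Qed.

Unset Implicit Arguments. Set Strict Implicit.




Section Seq.
Variables (C : numClosedFieldType) (k : nat) (u v a b : nat -> C).
Hypothesis H0 : forall n, (n <= k)%N ->
  0 = (if n is m.+1 then b m * u m else 0) + a n * u n + b n * u n.+1.
Hypothesis H1 : forall n, (n <= k)%N ->
  u n = (if n is m.+1 then b m * v m else 0) + a n * v n + b n * v n.+1.

Lemma CD_seq n : (n <= k)%N ->
  b n * (v n.+1 * u n - v n * u n.+1) = \sum_(j < n.+1) u j ^+ 2.
Proof.
elim: n => [|n IH] Hn.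
  have E0 := H0 _ Hn; have E1 := H1 _ Hn; rewrite /= in E0 E1.
  rewrite big_ord_recr big_ord0 /= add0r.
  have -> : b 0%N * (v 1%N * u 0%N - v 0%N * u 1%N)
     = u 0%N * (b 0%N * v 1%N) - v 0%N * (b 0%N * u 1%N) by ring.
  have -> : b 0%N * v 1%N = u 0%N - a 0%N * v 0%N by rewrite E1; ring.
  have -> : b 0%N * u 1%N = - (a 0%N * u 0%N) by rewrite -[RHS]add0r E0; ring.
  ring.
have E0 := H0 _ Hn; have E1 := H1 _ Hn; rewrite /= in E0 E1.
rewrite big_ord_recr /= -IH ?(ltnW Hn) //.
have -> : b n.+1 * (v n.+2 * u n.+1 - v n.+1 * u n.+2)
   = u n.+1 * (b n.+1 * v n.+2) - v n.+1 * (b n.+1 * u n.+2) by ring.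
have -> : b n.+1 * v n.+2 = u n.+1 - b n * v n - a n.+1 * v n.+1
  by rewrite E1; ring.
have -> : b n.+1 * u n.+2 = - (b n * u n + a n.+1 * u n.+1)
  by rewrite -[RHS]add0r E0; ring.
ring.
Qed.

Hypothesis breal : forall n, (n <= k)%N -> (b n)^* = b n.
Hypothesis bnz : forall n, (n <= k)%N -> b n != 0.
Hypothesis areal : forall n, (n <= k)%N -> (a n)^* = a n.
Hypothesis u0real : (u 0%N)^* = u 0%N.

Lemma real_seq n : (n <= k)%N -> (u n)^* = u n /\ (u n.+1)^* = u n.+1.
Proof.
have step : forall n, (n <= k)%N ->
   (if n is m.+1 then (u m)^* = u m else True) -> (u n)^* = u n ->
   (u n.+1)^* = u n.+1.
  move=> m Hm Hp Hc; have E0 := H0 _ Hm.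
  set M := (if m is m'.+1 then b m' * u m' else 0) in E0.
  have E : b m * u m.+1 = - (M + a m * u m).
    by rewrite -[LHS]subr0 E0; ring.
  apply: (mulfI (bnz _ Hm)); rewrite -{1}(breal _ Hm) -rmorphM /= E.
  rewrite rmorphN rmorphD /= rmorphM /= areal // Hc; congr (- (_ + _)).
  rewrite /M; case: m Hm {E0 E M} Hp Hc => [|m] Hm Hp Hc; first by rewrite rmorph0.
  by rewrite rmorphM /= Hp breal // ltnW.
elim: n => [|n IH] Hn.
  by split => //; apply: step.
have [IH1 IH2] := IH (ltnW Hn); split => //.
exact: step.
Qed.

End Seq.

Section IP.
Variables (C : numClosedFieldType) (N : nat) (lam om : 'I_N -> C).
Hypothesis lam_real : forall j, (lam j)^* = lam j.
Hypothesis om_ge0 : forall j, 0 <= om j.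

Local Notation ip := (mu_ip lam om).

Lemma om_real j : (om j)^* = om j.
Proof. exact: geC0_conj. Qed.

Lemma ip_suml I (r : seq I) (P : pred I) (F : I -> {poly C}) g :
  ip (\sum_(i <- r | P i) F i) g = \sum_(i <- r | P i) ip (F i) g.
Proof.
rewrite /mu_ip exchange_big /=; apply: eq_bigr => l _.
rewrite horner_sum mulr_sumr mulr_suml; apply: eq_bigr => i _; by [].
Qed.

Lemma ip_Zl a f g : ip (a *: f) g = a * ip f g.
Proof.
rewrite /mu_ip mulr_sumr; apply: eq_bigr => l _; rewrite hornerZ; ring.
Qed.

Lemma ip_Dl f h g : ip (f + h) g = ip f g + ip h g.
Proof.
rewrite /mu_ip -big_split /=; apply: eq_bigr => l _; rewrite hornerD; ring.
Qed.

Lemma ip_Nl f g : ip (- f) g = - ip f g.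
Proof.
rewrite /mu_ip -sumrN; apply: eq_bigr => l _; rewrite hornerN; ring.
Qed.

Lemma ip_Bl f h g : ip (f - h) g = ip f g - ip h g.
Proof. by rewrite ip_Dl ip_Nl. Qed.

Lemma ip_conj f g : ip g f = (ip f g)^*.
Proof.
rewrite /mu_ip rmorph_sum; apply: eq_bigr => l _.
by rewrite !rmorphM /= conjCK om_real mulrAC.
Qed.

Lemma ip_Dr f g h : ip f (g + h) = ip f g + ip f h.
Proof. by rewrite ip_conj ip_Dl rmorphD /= -!ip_conj. Qed.

Lemma ip_Br f g h : ip f (g - h) = ip f g - ip f h.
Proof. by rewrite ip_conj ip_Bl rmorphB /= -!ip_conj. Qed.

Lemma ip_Zr a f g : ip f (a *: g) = a^* * ip f g.
Proof. by rewrite ip_conj ip_Zl rmorphM /= -ip_conj. Qed.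

Lemma ip_ge0 f : 0 <= ip f f.
Proof.
rewrite /mu_ip; apply: sumr_ge0 => l _; rewrite -mulrA.
by apply: mulr_ge0 => //; apply: mul_conjC_ge0.
Qed.

Lemma ip_X f g : ip ('X * f) g = ip f ('X * g).
Proof.
rewrite /mu_ip; apply: eq_bigr => l _.
rewrite ![('X * _)]mulrC !hornerMX rmorphM /= lam_real; ring.
Qed.

Variables (K : nat) (p : nat -> {poly C}).
Hypothesis Hsize : forall i, (i <= K)%N -> size (p i) = i.+1 /\ 0 < lead_coef (p i).
Hypothesis Hon : forall i j, (i <= K)%N -> (j <= K)%N -> mu_ip lam om (p i) (p j) = (i == j)%:R.


Lemma span m (q : {poly C}) : (m <= K.+1)%N -> (size q <= m)%N ->
  exists a : nat -> C, q = \sum_(j < m) a j *: p j.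
Proof.
elim: m q => [|m IH] q Hm Hq.
  by exists (fun _ => 0); rewrite big_ord0; apply/eqP; rewrite -size_poly_eq0 -leqn0.
have [Hs Hl] := Hsize m (ltnSE Hm).
set c := q`_m / lead_coef (p m).
have Hl0 : lead_coef (p m) != 0 by rewrite gt_eqF.
have : (size (q - c *: p m)%R <= m)%N.
  apply/leq_sizeP => j; rewrite leq_eqVlt => /orP[/eqP <-|Hj].
    have Hpm : (p m)`_m = lead_coef (p m) by rewrite lead_coefE Hs.
    rewrite coefB coefZ /c -mulrA Hpm.
    by rewrite mulVf // mulr1 subrr.
  rewrite coefB coefZ.
  rewrite (leq_sizeP _ _ Hq) //.
  by rewrite (leq_sizeP _ _ (eq_leq Hs)) // mulr0 subrr.
move=> /(IH _ (ltnW Hm)) [a Ha].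
exists (fun j => if j == m then c else a j).
rewrite big_ord_recr /= eqxx (eq_bigr (fun j : 'I_m => a j *: p j)); last first.
  by move=> j _; rewrite ifN // neq_ltn ltn_ord.
by rewrite -Ha subrK.
Qed.

Lemma ip_sum_p m (a : nat -> C) i : (m <= K.+1)%N -> (i <= K)%N ->
  ip (\sum_(j < m) a j *: p j) (p i) = if (i < m)%N then a i else 0.
Proof.
move=> Hm Hi; rewrite ip_suml.
rewrite (eq_bigr (fun j : 'I_m => a j * (j == i :> nat)%:R)); last first.
  move=> j _; rewrite ip_Zl Hon //.
  by rewrite -ltnS (leq_trans (ltn_ord j)).
case: ltnP => Him.
  rewrite (bigD1 (Ordinal Him)) //= eqxx mulr1 big1 ?addr0 // => j Hj.
  by move: Hj; rewrite -val_eqE /= => /negbTE ->; rewrite mulr0.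
by rewrite big1 // => j _; rewrite ltn_eqF ?mulr0 // (leq_trans (ltn_ord j) Him).
Qed.

Lemma expand m (q : {poly C}) : (m <= K.+1)%N -> (size q <= m)%N ->
  q = \sum_(j < m) ip q (p j) *: p j.
Proof.
move=> Hm Hq; have [a Ha] := span _ _ Hm Hq.
have E : forall j : 'I_m, ip q (p j) = a j.
  by move=> j; rewrite Ha ip_sum_p ?ltn_ord // -ltnS (leq_trans (ltn_ord j)).
by rewrite (eq_bigr (fun j : 'I_m => a j *: p j)) // => j _; rewrite E.
Qed.

Lemma ortho_low n (g : {poly C}) : (n <= K)%N -> (size g <= n)%N -> ip g (p n) = 0.
Proof.
move=> Hn Hg; rewrite (expand n g) ?(leq_trans Hn) //.
by rewrite (ip_sum_p n (fun j => ip g (p j))) ?ltnn // (leq_trans Hn).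
Qed.

Lemma size_Xq (q : {poly C}) : (size ('X * q)%R <= (size q).+1)%N.
Proof.
apply/leq_sizeP => j Hj; rewrite coefXM; case: j Hj => //= j Hj.
exact: (leq_sizeP _ _ (leqnn _)).
Qed.

Local Notation bn n := (ip ('X * p n) (p n.+1)).
Local Notation an n := (ip ('X * p n) (p n)).

Lemma bn_lead n : (n < K)%N -> bn n = lead_coef (p n) / lead_coef (p n.+1).
Proof.
move=> Hn; have [Hs Hl] := Hsize n (ltnW Hn); have [Hs1 Hl1] := Hsize n.+1 Hn.
set c := lead_coef (p n) / lead_coef (p n.+1).
have Hl0 : lead_coef (p n.+1) != 0 by rewrite gt_eqF.
have Hsz : (size ('X * p n - c *: p n.+1)%R <= n.+1)%N.
  apply/leq_sizeP => j; rewrite leq_eqVlt => /orP[/eqP <-|Hj].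
    have Hpm : (p n.+1)`_n.+1 = lead_coef (p n.+1) by rewrite lead_coefE Hs1.
    have Hpn : (p n)`_n = lead_coef (p n) by rewrite lead_coefE Hs.
    by rewrite coefB coefZ coefXM /= Hpm Hpn /c -mulrA mulVf // mulr1 subrr.
  rewrite coefB coefZ coefXM; case: j Hj => // j Hj /=.
  rewrite (leq_sizeP _ _ (eq_leq Hs)) // (leq_sizeP _ _ (eq_leq Hs1)) ?mulr0 ?subrr //.
rewrite -(subrK (c *: p n.+1) ('X * p n)) ip_Dl ortho_low // ip_Zl Hon // eqxx.
by rewrite mulr1 add0r.
Qed.

Lemma bn_pos n : (n < K)%N -> 0 < bn n.
Proof.
move=> Hn; rewrite bn_lead //; apply: divr_gt0.
  exact: (Hsize n (ltnW Hn)).2.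
exact: (Hsize n.+1 Hn).2.
Qed.

Lemma bn_real n : (n < K)%N -> (bn n)^* = bn n.
Proof. by move=> Hn; apply: geC0_conj; apply: ltW; apply: bn_pos. Qed.

Lemma an_real n : (an n)^* = an n.
Proof. by rewrite -ip_conj ip_X. Qed.

Lemma rec n : (n < K)%N ->
  'X * p n = (if n is m.+1 then bn m *: p m else 0) + an n *: p n + bn n *: p n.+1.
Proof.
move=> Hn.
rewrite {1}(expand n.+2 ('X * p n)) //; last first.
  by apply: (leq_trans (size_Xq _)); rewrite (Hsize n (ltnW Hn)).1.
rewrite big_ord_recr big_ord_recr /=; congr (_ + _ + _).
case: n Hn => [|m] Hn; first by rewrite big_ord0.
rewrite big_ord_recr /= big1 ?add0r.
  by rewrite (ip_X (p m.+1) (p m)) (ip_conj ('X * p m) (p m.+1)) bn_real // ltnW.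
move=> j _; rewrite ip_X ip_conj ortho_low ?rmorph0 ?scale0r //.
  exact: ltnW.
apply: (leq_trans (size_Xq _)); rewrite (Hsize j _).1 //.
  exact: ltn_ord.
apply: (leq_trans (ltnW (ltn_ord j))); apply: ltnW; exact: ltnW.
Qed.

Hypothesis om_sum : \sum_j om j = 1.

Lemma ip_sumr I (r : seq I) (P : pred I) (F : I -> {poly C}) g :
  ip g (\sum_(i <- r | P i) F i) = \sum_(i <- r | P i) ip g (F i).
Proof.
rewrite ip_conj ip_suml rmorph_sum; apply: eq_bigr => i _; by rewrite [RHS]ip_conj.
Qed.

Lemma l0_one : lead_coef (p 0%N) = 1.
Proof.
have [Hs Hl] := Hsize 0%N (leq0n _).
have Hp : p 0%N = (lead_coef (p 0%N))%:P.
  by rewrite lead_coefE Hs /=; apply: size1_polyC; rewrite Hs.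
set c := lead_coef (p 0%N) in Hp Hl *.
have := Hon 0%N 0%N (leq0n K) (leq0n K); rewrite Hp /mu_ip eqxx.
under eq_bigr => j _ do rewrite hornerC -mulrA.
rewrite -mulr_suml om_sum mul1r (geC0_conj (ltW Hl)) => /eqP.
rewrite -subr_eq0 (_ : c * c - 1 = (c - 1) * (c + 1)); last by ring.
rewrite mulf_eq0 => /orP[]; first by rewrite subr_eq0 => /eqP.
rewrite addr_eq0 => /eqP Hc; move: Hl; rewrite Hc oppr_gt0 => Hl.
by have := lt_trans Hl ltr01; rewrite ltxx.
Qed.

Lemma u0_one : (p 0%N)`_0 = 1.
Proof.
have [Hs Hl] := Hsize 0%N (leq0n _).
by rewrite -l0_one lead_coefE Hs.
Qed.

Lemma coef_if n i :
  ((if n is m.+1 then bn m *: p m else 0) : {poly C})`_i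
  = if n is m.+1 then bn m * (p m)`_i else 0.
Proof. by case: n => [|m]; rewrite ?coef0 ?coefZ. Qed.

Lemma rec0 n : (n < K)%N ->
  0 = (if n is m.+1 then bn m * (p m)`_0 else 0) + an n * (p n)`_0
      + bn n * (p n.+1)`_0.
Proof.
move=> Hn; have := congr1 (fun P : {poly C} => P`_0) (rec n Hn).
by rewrite /= coefXM /= !coefD !coefZ coef_if.
Qed.

Lemma rec1 n : (n < K)%N ->
  (p n)`_0 = (if n is m.+1 then bn m * (p m)`_1 else 0) + an n * (p n)`_1
      + bn n * (p n.+1)`_1.
Proof.
move=> Hn; have := congr1 (fun P : {poly C} => P`_1) (rec n Hn).
by rewrite /= coefXM /= !coefD !coefZ coef_if.
Qed.

Variable k : nat.
Hypothesis HkK : (k < K)%N.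

Lemma CD : bn k * ((p k.+1)`_1 * (p k)`_0 - (p k)`_1 * (p k.+1)`_0)
  = \sum_(j < k.+1) (p j)`_0 ^+ 2.
Proof.
apply: (@CD_seq C k (fun n => (p n)`_0) (fun n => (p n)`_1)
          (fun n => an n) (fun n => bn n)) => //.
  by move=> n Hn; apply: rec0; apply: (leq_ltn_trans Hn).
by move=> n Hn; apply: rec1; apply: (leq_ltn_trans Hn).
Qed.

Lemma u_real j : (j <= k)%N -> ((p j)`_0)^* = (p j)`_0.
Proof.
move=> Hj.
have h1 : forall n, (n <= k)%N -> 0 = (if n is m.+1 then bn m * (p m)`_0 else 0)
   + an n * (p n)`_0 + bn n * (p n.+1)`_0.
  by move=> n Hn; apply: rec0; apply: (leq_ltn_trans Hn).
have h2 : forall n, (n <= k)%N -> (bn n)^* = bn n.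
  by move=> n Hn; apply: bn_real; apply: (leq_ltn_trans Hn).
have h3 : forall n, (n <= k)%N -> bn n != 0.
  by move=> n Hn; rewrite gt_eqF // bn_pos //; apply: (leq_ltn_trans Hn).
have h4 : forall n, (n <= k)%N -> (an n)^* = an n.
  by move=> n Hn; apply: an_real.
have h5 : ((p 0%N)`_0)^* = (p 0%N)`_0 by rewrite u0_one rmorph1.
by have [] := @real_seq C k (fun n => (p n)`_0) (fun n => an n) (fun n => bn n) h1 h2 h3 h4 h5 j Hj.
Qed.

Local Notation S := (\sum_(j < k.+1) (p j)`_0 ^+ 2).
Local Notation qs := (S^-1 *: \sum_(j < k.+1) (p j)`_0 *: p j).

Lemma S_ge1 : 1 <= S.
Proof.
rewrite big_ord_recl /= u0_one expr1n lerDl; apply: sumr_ge0 => i _.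
by rewrite expr2 -{2}u_real ?mul_conjC_ge0 // ltnS ltn_ord.
Qed.

Lemma S_neq0 : S != 0.
Proof. by rewrite gt_eqF // (lt_le_trans ltr01 S_ge1). Qed.

Lemma S_real : S^* = S.
Proof.
rewrite rmorph_sum; apply: eq_bigr => j _; rewrite rmorphXn /= u_real //.
by rewrite -ltnS ltn_ord.
Qed.

Lemma ip_qs (q : {poly C}) : (size q <= k.+1)%N -> ip q qs = q`_0 / S.
Proof.
move=> Hq; have Eq := expand k.+1 q (ltnW HkK) Hq.
rewrite ip_Zr ip_sumr {2}Eq coef_sum fmorphV /= S_real [RHS]mulrC; congr (_ * _).
apply: eq_bigr => j _; rewrite ip_Zr coefZ u_real; first by rewrite mulrC.
by rewrite -ltnS ltn_ord.
Qed.

Lemma qs_size : (size qs <= k.+1)%N.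
Proof.
apply/leq_sizeP => i Hi; rewrite coefZ coef_sum.
rewrite [X in _ * X](eq_bigr (fun _ => 0)); first by rewrite big1_eq mulr0.
move=> j _; rewrite coefZ (leq_sizeP (p j) j.+1 _ i) ?mulr0 //.
  rewrite (Hsize j _).1 //.
  exact: (ltnW (leq_trans (ltn_ord j) HkK)).
exact: (leq_trans (ltn_ord j) Hi).
Qed.

Lemma qs0 : qs`_0 = 1.
Proof.
rewrite coefZ coef_sum [X in _ * X](eq_bigr (fun j : 'I_k.+1 => (p j)`_0 ^+ 2)).
  by rewrite mulVf // S_neq0.
by move=> j _; rewrite coefZ expr2.
Qed.

Lemma ip_qsqs : ip qs qs = S^-1.
Proof. by rewrite ip_qs ?qs_size // qs0 mul1r. Qed.

Lemma min_lower (q : {poly C}) : (size q <= k.+1)%N -> q`_0 = 1 -> S^-1 <= ip q q.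
Proof.
move=> Hq H0; have := ip_ge0 (q - qs).
rewrite ip_Bl !ip_Br ip_qs // H0 ip_qsqs (ip_conj q qs) ip_qs // H0.
by rewrite !mul1r fmorphV /= S_real subrr subr0 subr_ge0.
Qed.

Lemma lead_neq0 n : (n <= K)%N -> lead_coef (p n) != 0.
Proof. by move=> Hn; rewrite gt_eqF // (Hsize n Hn).2. Qed.

Lemma prod_bn n : (n <= K)%N -> \prod_(j < n) bn j = (lead_coef (p n))^-1.
Proof.
have L := l0_one.
elim: n => [|n IH] Hn; first by rewrite big_ord0 L invr1.
rewrite big_ord_recr /= IH ?(ltnW Hn) // bn_lead //.
by rewrite mulrA mulVf ?mul1r // lead_neq0 // ltnW.
Qed.

Lemma deriv0 (P : {poly C}) : P^`().[0] = P`_1.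
Proof. by rewrite horner_coef0 coef_deriv mulr1n. Qed.

Lemma final_poly (r2 : C) :
  (exists c : 'I_k -> C, r2 = ip (Qpoly c) (Qpoly c)) ->
  (forall c : 'I_k -> C, r2 <= ip (Qpoly c) (Qpoly c)) ->
  r2 = 1 / \sum_(j < k.+1) (p j).[0] ^+ 2 /\
  r2 = 1 / (bn k * ((p k.+1)^`().[0] * (p k).[0] - (p k)^`().[0] * (p k.+1).[0])) /\
  r2 = (\prod_(j < k) bn j ^+ 2) /
       ((monic_op p k.+1)^`().[0] * (monic_op p k).[0]
        - (monic_op p k)^`().[0] * (monic_op p k.+1).[0]).
Proof.
move=> [c Hc] Hle.
have E : r2 = S^-1.
  apply/eqP; rewrite eq_le; apply/andP; split.
    rewrite -ip_qsqs (Q_repr qs_size qs0); exact: Hle.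
  by rewrite Hc; apply: min_lower; [apply: Qpoly_size | apply: Qpoly0].
have ES : \sum_(j < k.+1) (p j).[0] ^+ 2 = S.
  by apply: eq_bigr => j _; rewrite horner_coef0.
split; first by rewrite ES div1r.
rewrite !deriv0 !horner_coef0 CD div1r; split => //.
rewrite /monic_op !coefZ prodrXl prod_bn //.
  2: exact: ltnW.
rewrite E -CD bn_lead //.
have h1 := lead_neq0 k (ltnW HkK); have h2 := lead_neq0 k.+1 HkK.
have hD : ((p k.+1)`_1 * (p k)`_0 - (p k)`_1 * (p k.+1)`_0) != 0.
  apply/eqP => hD; move: S_neq0; rewrite -CD hD mulr0 eqxx //.
set D := ((p k.+1)`_1 * (p k)`_0 - (p k)`_1 * (p k.+1)`_0) in hD *.
rewrite (_ : _ * _ - _ = (lead_coef (p k.+1) * lead_coef (p k))^-1 * D); last first.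
  by rewrite /D invfM; ring.
by field; rewrite h1 h2 hD.
Qed.

End IP.


Section Mx.
Variables (C : numClosedFieldType) (N : nat) (W : 'M[C]_N) (b : 'cV[C]_N)
  (U : 'M[C]_N) (Lam : 'rV[C]_N).
Hypothesis HW : W ^t* = W.
Hypothesis HU : U \is unitarymx.
Hypothesis HWd : W = U *m diag_mx Lam *m U ^t*.

Lemma UUt : U *m U ^t* = 1%:M.
Proof. exact/unitarymxP. Qed.

Lemma UtU : U ^t* *m U = 1%:M.
Proof. exact/mulmx1C/UUt. Qed.

Lemma norm2sqE (v : 'cV[C]_N) : norm2sq v = (v ^t* *m v) 0 0.
Proof.
rewrite /norm2sq mxE; apply: eq_bigr => j _; rewrite !mxE normCK mulrC //.
Qed.

Lemma tr_mulmx (m n r : nat) (A : 'M[C]_(m, n)) (B : 'M[C]_(n, r)) :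
  (A *m B) ^t* = B ^t* *m A ^t*.
Proof. by rewrite trmx_mul map_mxM. Qed.

Lemma norm2sq_Ut (v : 'cV[C]_N) : norm2sq (U ^t* *m v) = norm2sq v.
Proof.
by rewrite !norm2sqE tr_mulmx trmxCK mulmxA -(mulmxA _ U) UUt mulmx1.
Qed.

Lemma D_eq : U ^t* *m W *m U = diag_mx Lam.
Proof. by rewrite HWd !mulmxA UtU mul1mx -mulmxA UtU mulmx1. Qed.

Lemma Lam_real j : (Lam 0 j)^* = Lam 0 j.
Proof.
have : (U ^t* *m W *m U) ^t* = U ^t* *m W *m U.
  by rewrite !tr_mulmx trmxCK HW mulmxA.
rewrite D_eq => /matrixP /(_ j j); rewrite !mxE eqxx /=.
by rewrite mulr1n.
Qed.

Lemma UtW (v : 'cV[C]_N) j :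
  (U ^t* *m (W *m v)) j 0 = Lam 0 j * (U ^t* *m v) j 0.
Proof.
rewrite mulmxA -{1}(mulmx1 (U ^t* *m W)) -UUt mulmxA D_eq -mulmxA.
by rewrite mul_diag_mx mxE.
Qed.

Lemma UtWn i (v : 'cV[C]_N) j :
  (U ^t* *m (W ^+ i *m v)) j 0 = Lam 0 j ^+ i * (U ^t* *m v) j 0.
Proof.
elim: i v => [|i IH] v; first by rewrite expr0 -idmxE mul1mx mul1r.
by rewrite exprSr -mulmxE -mulmxA IH UtW mulrA -exprSr.
Qed.



Lemma resid k (c : 'I_k -> C) j :
  (U ^t* *m (b - W *m \sum_(i < k) c i *: (W ^+ i *m b))) j 0
  = (Qpoly c).[Lam 0 j] * (U ^t* *m b) j 0.
Proof.
have subE : forall A B : 'cV[C]_N, (A - B) j 0 = A j 0 - B j 0 by move=> A B; rewrite !mxE.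
rewrite mulmxBr subE UtW mulmx_sumr summxE.
under eq_bigr => i _ do rewrite -scalemxAr mxE UtWn.
rewrite /Qpoly hornerD hornerN hornerC hornerM hornerX horner_sum.
under [in RHS]eq_bigr => i _ do rewrite hornerZ hornerXn.
rewrite mulrBl mul1r -mulrA mulr_suml; congr (_ - Lam 0 j * _).
by apply: eq_bigr => i _; rewrite mulrA.
Qed.

Lemma resid_norm k (c : 'I_k -> C) :
  norm2sq (b - W *m \sum_(i < k) c i *: (W ^+ i *m b))
  = mu_ip (spec_nodes Lam) (spec_weights U b) (Qpoly c) (Qpoly c).
Proof.
rewrite -norm2sq_Ut /norm2sq /mu_ip; apply: eq_bigr => j _.
rewrite resid /spec_weights /spec_nodes normrM exprMn !normCK; ring.
Qed.

End Mx.
Lemma om_sum1 (C : numClosedFieldType) (N : nat) (b : 'cV[C]_N) (U : 'M[C]_N) :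
  U \is unitarymx -> norm2sq b = 1 -> \sum_j spec_weights U b j = 1.
Proof. by move=> HU H; rewrite -H -(@norm2sq_Ut C N U HU). Qed.


Theorem proposition4p2 (C : numClosedFieldType) (N : nat)
  (W : 'M[C]_N) (b : 'cV[C]_N) (U : 'M[C]_N) (Lam : 'rV[C]_N) :
  W ^t* = W ->
  (forall v : 'cV[C]_N, v != 0 -> 0 < (v ^t* *m W *m v) 0 0) ->
  norm2sq b = 1 ->
  U \is unitarymx ->
  W = U *m diag_mx Lam *m U ^t* ->
  forall (k : nat) (x : 'cV[C]_N) (p : nat -> {poly C}),
    is_minres_iterate W b k x ->
    is_orthonormal_family (spec_nodes Lam) (spec_weights U b) k.+1 p ->
    let lam := spec_nodes Lam in
    let om := spec_weights U b in
    let bn := rec_b lam om p in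
    let pim := monic_op p in
    let r := b - W *m x in
    norm2sq r = 1 / \sum_(j < k.+1) (p j).[0] ^+ 2 /\
    norm2sq r = 1 / (bn k * ((p k.+1)^`().[0] * (p k).[0]
                             - (p k)^`().[0] * (p k.+1).[0])) /\
    norm2sq r = (\prod_(j < k) bn j ^+ 2) /
                ((pim k.+1)^`().[0] * (pim k).[0]
                 - (pim k)^`().[0] * (pim k.+1).[0]).
Proof.
move=> HW _ Hb HU HWd k x p [[c Hx] Hmin] [Hsz Hon] lam om bn pim r.
have Hlr : forall j, (lam j)^* = lam j.
  by move=> j; exact: (@Lam_real C N W U Lam HW HU HWd j).
have Hom : forall j, 0 <= om j.
  by move=> j; rewrite /om /spec_weights exprn_ge0.
have Hsum : \sum_j om j = 1 by exact: om_sum1.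
have Hr : r = b - W *m \sum_(i < k) c i *: (W ^+ i *m b) by rewrite /r Hx.
have Rn := @resid_norm C N W b U Lam HU HWd k.
apply: (@final_poly C N lam om Hlr Hom k.+1 p Hsz Hon Hsum k (ltnSn k)).
  by exists c; rewrite Hr Rn.
move=> c'; rewrite -(Rn c'); apply: Hmin.
by exists c'.
Qed.
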